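(* Let $R\ge 1$, let $q^{CAV}_1,\dots,q^{CAV}_R\ge 0$ be route flows with $q^{CAV}=\sum_r q^{CAV}_r>0$, let $t^{CAV}_1,\dots,t^{CAV}_R>0$ be route travel times, and let $(I,di)$ be the space of drivers with total mass $|I|=q^{CAV}$. Then: (i) Every assignment plan $\mu$ defines an offer profile, namely $T^{CAV}_i:=\sum_r t^{CAV}_r\mu(i,r)$. (ii) If $R=2$, then every offer profile $T^{CAV}$ is feasible. Moreover, if $t^{CAV}_1\neq t^{CAV}_2$, the assignment plan inducing $T^{CAV}$ is unique (up to $di$-almost everywhere equality). (iii) If $R\ge 3$, then not every offer profile need be feasible: there exist flows and travel times with three routes and an offer profile subject to them which is not feasible.
   Context: Drivers are indexed by a measure space $(I,di)$ with total mass $|I|=q^{CAV}$: either infinitesimal drivers ($I$ an interval with Lebesgue measure) or atomic drivers ($I=\{1,\dots,q^{CAV}\}$ with counting measure). Given flows $\mathbf q^{CAV}=(q^{CAV}_1,\dots,q^{CAV}_R)$ and travel times $\mathbf t^{CAV}=(t^{CAV}_1,\dots,t^{CAV}_R)$, an offer profile subject to $(\mathbf q^{CAV},\mathbf t^{CAV})$ is a measurable function $T^{CAV}:I\to[\min_r t^{CAV}_r,\max_r t^{CAV}_r]$ with $\frac1{|I|}\int_I T^{CAV}_i\,di=\frac1{q^{CAV}}\sum_r q^{CAV}_r t^{CAV}_r$. An assignment plan inducing $T^{CAV}$ is a measurable $\mu:I\times\{1,\dots,R\}\to[0,1]$ such that $\int_I\mu(i,r)\,di=q^{CAV}_r$ for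 every $r$, $\sum_r\mu(i,r)=1$ for a.e. $i$, and $\sum_r t^{CAV}_r\mu(i,r)=T^{CAV}_i$ for a.e. $i$. An offer profile is feasible if it is induced by at least one assignment plan. *)

(* Defs.v *)
From HB Require Import structures.
From mathcomp Require Import all_boot all_order all_algebra.
From mathcomp Require Import all_classical all_reals all_analysis.
Set Implicit Arguments. Unset Strict Implicit. Unset Printing Implicit Defensive.
Import Order.TTheory GRing.Theory Num.Theory.
Local Open Scope classical_set_scope.
Local Open Scope ring_scope.

(* Drivers live in a subset I of the real line (the type measurableTypeR R,
   i.e. R with its Borel sigma-algebra), equipped with a measure m ("di").
   Either I is an interval with Lebesgue measure (infinitesimal drivers), or
   I = {1,...,n} with the counting measure (atomic drivers). *)
Definition driver_space (R : realType) (q : R) (I : set (measurableTypeR R))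
  (m : {measure set (measurableTypeR R) -> \bar R}) : Prop :=
  ((is_interval I /\ (m = lebesgue_measure :> (set (measurableTypeR R) -> \bar R)))
   \/ (exists n : nat, I = [set (k%:R : R) | k in [set k : nat | (1 <= k <= n)%N]]
         /\ (m = counting :> (set (measurableTypeR R) -> \bar R))))
  /\ m I = q%:E.

(* Routes are indexed by 'I_n.+1 (so there are R = n+1 >= 1 routes). *)
Definition tmin (R : realType) (n : nat) (t : 'I_n.+1 -> R) : R :=
  \big[Num.min/t ord0]_(r < n.+1) t r.
Definition tmax (R : realType) (n : nat) (t : 'I_n.+1 -> R) : R :=
  \big[Num.max/t ord0]_(r < n.+1) t r.

Definition total_flow (R : realType) (n : nat) (qv : 'I_n.+1 -> R) : R :=
  \sum_(r < n.+1) qv r.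

Definition flows_times (R : realType) (n : nat) (qv tv : 'I_n.+1 -> R) : Prop :=
  (forall r, 0 <= qv r) /\ 0 < total_flow qv /\ (forall r, 0 < tv r).

(* Functions are taken on the
   whole real line; only their values on I matter.  The range condition is
   required m-almost everywhere on I (functions are considered up to
   di-a.e. equality). *)
Definition offer_profile (R : realType) (n : nat) (qv tv : 'I_n.+1 -> R)
  (I : set (measurableTypeR R)) (m : {measure set (measurableTypeR R) -> \bar R})
  (T : measurableTypeR R -> R) : Prop :=
  measurable_fun I T /\
  {ae m, forall i, I i -> tmin tv <= T i <= tmax tv} /\
  (((fine (m I))^-1)%:E * \int[m]_(i in I) (T i)%:E
     = ((total_flow qv)^-1 * \sum_(r < n.+1) qv r * tv r)%:E)%E.

Definition assignment_plan (R : realType) (n : nat) (qv : 'I_n.+1 -> R)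
  (I : set (measurableTypeR R)) (m : {measure set (measurableTypeR R) -> \bar R})
  (mu : measurableTypeR R -> 'I_n.+1 -> R) : Prop :=
  (forall r, measurable_fun I (fun i => mu i r)) /\
  (forall i, I i -> forall r, 0 <= mu i r <= 1) /\
  (forall r, (\int[m]_(i in I) (mu i r)%:E = (qv r)%:E)%E) /\
  {ae m, forall i, I i -> \sum_(r < n.+1) mu i r = 1}.

Definition induces (R : realType) (n : nat) (tv : 'I_n.+1 -> R)
  (I : set (measurableTypeR R)) (m : {measure set (measurableTypeR R) -> \bar R})
  (mu : measurableTypeR R -> 'I_n.+1 -> R) (T : measurableTypeR R -> R) : Prop :=
  {ae m, forall i, I i -> \sum_(r < n.+1) tv r * mu i r = T i}.

Definition feasible (R : realType) (n : nat) (qv tv : 'I_n.+1 -> R)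
  (I : set (measurableTypeR R)) (m : {measure set (measurableTypeR R) -> \bar R})
  (T : measurableTypeR R -> R) : Prop :=
  exists mu, assignment_plan qv I m mu /\ induces tv I m mu T.

(* Main.v *)
Require Import Defs.
From HB Require Import structures.
From mathcomp Require Import all_boot all_order all_algebra.
From mathcomp Require Import all_classical all_reals all_analysis.
From mathcomp Require Import measurable_realfun.
From mathcomp Require Import zify ring lra.
Import Order.TTheory GRing.Theory Num.Theory.
Local Open Scope classical_set_scope.
Local Open Scope ring_scope.

Lemma driver_meas {R : realType} {q : R} {I : set (measurableTypeR R)}
  {m : {measure set (measurableTypeR R) -> \bar R}} :
  driver_space q I m -> measurable I.
Proof.
move=> [[[iI _]|[n [-> _]]] _]; first exact: is_interval_measurable.
apply: countable_measurable; first by move=> t; exact: measurable_set1.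
apply: (sub_countable (card_image_le _ _)); exact: countableP.
Qed.


Lemma driver_mass {R : realType} {q : R} {I : set (measurableTypeR R)}
  {m : {measure set (measurableTypeR R) -> \bar R}} :
  driver_space q I m -> m I = q%:E.
Proof. by case. Qed.

Lemma tmin_le {R : realType} {n} (t : 'I_n.+1 -> R) r : tmin t <= t r.
Proof. exact: bigmin_le. Qed.
Lemma tmax_ge {R : realType} {n} (t : 'I_n.+1 -> R) r : t r <= tmax t.
Proof. exact: le_bigmax. Qed.

Lemma plan_integrable {R : realType} {n} {qv : 'I_n.+1 -> R} {I : set (measurableTypeR R)}
  {m : {measure set (measurableTypeR R) -> \bar R}} {mu} :
  measurable I -> assignment_plan qv I m mu ->
  forall r, m.-integrable I (fun i => (mu i r)%:E).
Proof.
move=> mI [mmu [b01 [int _]]] r; apply/integrableP; split.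
  exact/measurable_EFinP.
rewrite (eq_integral (fun i => (mu i r)%:E)).
  by rewrite int ltry.
move=> x /set_mem Ix; rewrite gee0_abs // lee_fin; by case/andP: (b01 x Ix r).
Qed.

Lemma part1 (R : realType) (n : nat) (qv tv : 'I_n.+1 -> R) (I : set (measurableTypeR R))
          (m : {measure set (measurableTypeR R) -> \bar R}) :
     flows_times qv tv -> driver_space (total_flow qv) I m ->
     forall mu, assignment_plan qv I m mu ->
       offer_profile qv tv I m (fun i => \sum_(r < n.+1) tv r * mu i r).
Proof.
move=> [q0 [Q0 t0]] D mu P.
have mI := driver_meas D.
have mass := driver_mass D.
have intm := plan_integrable mI P.
have [mmu [b01 [int ae1]]] := P.
split.
  apply: measurable_sum => r.
  exact: measurable_funM (measurable_cst _) (mmu r).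
split.
  apply: filterS ae1 => x H Ix; move: (H Ix) => s1.
  apply/andP; split.
    rewrite -[tmin tv]mulr1 -s1 mulr_sumr; apply: ler_sum => r _.
    by apply: ler_wpM2r; [case/andP: (b01 x Ix r)|exact: tmin_le].
  rewrite -[tmax tv]mulr1 -s1 mulr_sumr; apply: ler_sum => r _.
  by apply: ler_wpM2r; [case/andP: (b01 x Ix r)|exact: tmax_ge].
rewrite mass /=.
under eq_integral do rewrite -sumEFin.
rewrite integral_sum //; last first.
  by move=> r; under eq_fun do rewrite EFinM; exact: integrableZl.
rewrite (eq_bigr (fun r => (tv r)%:E * (qv r)%:E)%E); last first.
  by move=> r _; under eq_integral do rewrite EFinM; rewrite integralZl // int.
under eq_bigr do rewrite -EFinM.
rewrite sumEFin -EFinM; congr (_%:E); congr (_ * _).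
by apply: eq_bigr => r _; rewrite mulrC.
Qed.

Lemma sum2E (R : realType) (F : 'I_2 -> R) : \sum_(r < 2) F r = F ord0 + F ord_max.
Proof.
rewrite big_ord_recr /= big_ord1; congr (F _ + _); exact: val_inj.
Qed.

Lemma ord2_cases (i : 'I_2) : i = ord0 \/ i = ord_max.
Proof. by case: i => [[|[|//]] ?]; [left|right]; apply: val_inj. Qed.

Lemma tmin2 (R : realType) (t : 'I_2 -> R) : tmin t = Num.min (t ord0) (t ord_max).
Proof.
apply/le_anti/andP; split; first by rewrite le_min !tmin_le.
apply: le_bigmin; first by rewrite ge_min lexx.
by move=> i _; case: (ord2_cases i) => ->; rewrite ge_min lexx ?orbT.
Qed.

Lemma tmax2 (R : realType) (t : 'I_2 -> R) : tmax t = Num.max (t ord0) (t ord_max).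
Proof.
apply/le_anti/andP; split; last by rewrite ge_max !tmax_ge.
apply: bigmax_le; first by rewrite le_max lexx.
by move=> i _; case: (ord2_cases i) => ->; rewrite le_max lexx ?orbT.
Qed.

Lemma cst_integrable (R : realType) (I : set (measurableTypeR R))
  (m : {measure set (measurableTypeR R) -> \bar R}) (Q c : R) :
  measurable I -> m I = Q%:E -> m.-integrable I (fun _ => c%:E).
Proof.
move=> mI mQ; apply/integrableP; split; first exact: measurable_cst.
rewrite (@integral_cst _ _ _ m I mI `|c%:E|) mQ /= -EFinM; exact: ltry.
Qed.

Lemma bounded_integrable {R : realType} {I : set (measurableTypeR R)}
  {m : {measure set (measurableTypeR R) -> \bar R}} {Q lo hi : R} {f} :
  measurable I -> m I = Q%:E -> measurable_fun I f ->
  (forall x, I x -> lo <= f x <= hi) -> m.-integrable I (fun x => (f x)%:E).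
Proof.
move=> mI mQ mf fb.
apply: (@le_integrable _ _ _ m I mI _ (fun _ => (`|lo| + `|hi|)%:E)) => //.
  exact/measurable_EFinP.
  move=> x Ix; rewrite (abse_EFin (f x)) (abse_EFin (`|lo| + `|hi|)) lee_fin.
  have /andP[h1 h2] := fb x Ix.
  have := lexx `|lo|; rewrite {1}ler_norml => /andP[l1 l2].
  have := lexx `|hi|; rewrite {1}ler_norml => /andP[l3 l4].
  rewrite (ger0_norm (x := `|lo| + `|hi|)) ?addr_ge0 // ler_norml.
  apply/andP; split; lra.
exact: cst_integrable mI mQ.
Qed.

Lemma affine_integral {R : realType} {I : set (measurableTypeR R)}
  {m : {measure set (measurableTypeR R) -> \bar R}} {Q F : R} (c d : R) {f} :
  measurable I -> m I = Q%:E -> m.-integrable I (fun x => (f x)%:E) ->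
  (\int[m]_(x in I) (f x)%:E = F%:E)%E ->
  (\int[m]_(x in I) (c * f x + d)%:E = (c * F + d * Q)%:E)%E.
Proof.
move=> mI mQ intf hF.
under eq_integral do rewrite EFinD EFinM.
rewrite integralD //; last 2 first.
- exact: integrableZl.
- exact: cst_integrable mI mQ.
by rewrite integralZl // hF (@integral_cst _ _ _ m I mI d%:E) mQ -!EFinM -EFinD.
Qed.

Lemma frac01 (R : realType) (a b y : R) : a != b ->
  Num.min a b <= y <= Num.max a b ->
  (0 <= (y - b) / (a - b) <= 1) /\ (0 <= (a - y) / (a - b) <= 1).
Proof.
move=> ab /andP[h1 h2].
have ab' : a - b != 0 by rewrite subr_eq0.
have e1 : (y - b) / (a - b) * (a - b) = y - b by rewrite divfK.
have e2 : (a - y) / (a - b) * (a - b) = a - y by rewrite divfK.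
move: e1 e2; set s := (y - b) / (a - b); set u := (a - y) / (a - b); clearbody s u => e1 e2.
case: (ltgtP a b) => h.
- rewrite (min_l (ltW h)) in h1; rewrite (max_r (ltW h)) in h2.
  clear ab ab'; split; apply/andP; split; nra.
- rewrite (min_r (ltW h)) in h1; rewrite (max_l (ltW h)) in h2.
  clear ab ab'; split; apply/andP; split; nra.
- by move: ab; rewrite h eqxx.
Qed.

Lemma part2 (R : realType) (qv tv : 'I_2 -> R) (I : set (measurableTypeR R))
          (m : {measure set (measurableTypeR R) -> \bar R}) :
     flows_times qv tv -> driver_space (total_flow qv) I m ->
     forall T, offer_profile qv tv I m T ->
       feasible qv tv I m T /\
       (tv ord0 <> tv ord_max ->
        forall mu1 mu2,
          assignment_plan qv I m mu1 -> induces tv I m mu1 T ->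
          assignment_plan qv I m mu2 -> induces tv I m mu2 T ->
          {ae m, forall i, I i -> forall r, mu1 i r = mu2 i r}).
Proof.
move=> [q0 [Q0 t0]] D T [mT [aeT intT]].
have mI := driver_meas D.
have mass := driver_mass D.
have QE : total_flow qv = qv ord0 + qv ord_max by rewrite /total_flow sum2E.
move: Q0 mass intT; rewrite QE.
set a := tv ord0; set b := tv ord_max; set q1 := qv ord0; set q2 := qv ord_max.
move=> Q0 mass intT.
have Qn0 : q1 + q2 != 0 by rewrite gt_eqF.
have q1p : 0 <= q1 := q0 ord0.
have q2p : 0 <= q2 := q0 ord_max.
rewrite tmin2 tmax2 -/a -/b in aeT.
have intTE : (\int[m]_(x in I) (T x)%:E = (q1 * a + q2 * b)%:E)%E.
  rewrite mass /= sum2E in intT.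
  have -> : (\int[m]_(x in I) (T x)%:E =
      (q1 + q2)%:E * (((q1 + q2)^-1)%:E * \int[m]_(x in I) (T x)%:E))%E.
    by rewrite muleA -EFinM divff // mul1e.
  by rewrite intT -EFinM mulrA divff // mul1r.
set lo := Num.min a b; set hi := Num.max a b.
pose Tc x := Num.min (Num.max (T x) lo) hi.
have mTc : measurable_fun I Tc.
  apply: measurable_minr; last exact: measurable_cst.
  by apply: measurable_maxr => //; exact: measurable_cst.
have lohi : lo <= hi by rewrite ge_min !le_max lexx.
have Tcb x : lo <= Tc x <= hi.
  apply/andP; split; last by rewrite /Tc ge_min lexx orbT.
  by rewrite /Tc le_min lohi andbT le_max lexx orbT.
have TcE : {ae m, forall x, I x -> Tc x = T x}.
  apply: filterS aeT => x H Ix; have /andP[h1 h2] := H Ix.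
  by rewrite /Tc max_l // min_l.
have intTc : m.-integrable I (fun x => (Tc x)%:E).
  exact: (bounded_integrable mI mass mTc (fun x _ => Tcb x)).
have intTcE : (\int[m]_(x in I) (Tc x)%:E = (q1 * a + q2 * b)%:E)%E.
  rewrite -intTE; apply: (ae_eq_integral (fun x => (T x)%:E)) => //.
  - exact/measurable_EFinP.
  - exact/measurable_EFinP.
  by apply: filterS TcE => x H Ix; rewrite H.
split.
  have [eab|nab] := eqVneq a b.
    exists (fun _ r => if r == ord0 then q1 / (q1 + q2) else q2 / (q1 + q2)).
    split.
      split; first by move=> r; case: (r == ord0); exact: measurable_cst.
      split.
        move=> x _ r; case: (r == ord0); apply/andP; split.
        - by rewrite divr_ge0 // ltW.
        - by rewrite ler_pdivrMr // mul1r lerDl.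
        - by rewrite divr_ge0 // ltW.
        - by rewrite ler_pdivrMr // mul1r lerDr.
      split.
        move=> r; rewrite (@integral_cst _ _ _ m I mI) mass -EFinM.
        case: (ord2_cases r) => -> /=; congr (_%:E); first by rewrite divfK.
        by rewrite divfK.
      by apply: aeW => x Ix; rewrite sum2E /= -mulrDl divff.
    apply: filterS aeT => x H Ix; have /andP[h1 h2] := H Ix.
    rewrite sum2E /= -/a -/b.
    have Tx : T x = a by move: h1 h2; rewrite /lo /hi -eab minxx maxxx => h1 h2; apply: le_anti; rewrite h1 h2.
    rewrite Tx -eab -mulrDr -mulrDl divff // mulr1 //.
  exists (fun x r => if r == ord0 then (Tc x - b) / (a - b) else (a - Tc x) / (a - b)).
  have abn : a - b != 0 by rewrite subr_eq0.
  split.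
    split.
      move=> r; case: (r == ord0).
        apply: measurable_funM; last exact: measurable_cst.
        by apply: measurable_funB => //; exact: measurable_cst.
      apply: measurable_funM; last exact: measurable_cst.
      by apply: measurable_funB => //; exact: measurable_cst.
    split.
      move=> x _ r; have [h1 h2] := frac01 _ _ _ _ nab (Tcb x).
      by case: (r == ord0).
    split.
      move=> r; case: (ord2_cases r) => -> /=.
      + rewrite (eq_integral (fun x => ((a - b)^-1 * Tc x + (- b / (a - b)))%:E)); last first.
          by move=> x _; congr (_%:E); field.
        rewrite (affine_integral _ _ mI mass intTc intTcE); congr (_%:E).
        rewrite /q1 /q2 -/a -/b; field; exact: abn.
      + rewrite (eq_integral (fun x => ((- (a - b)^-1) * Tc x + (a / (a - b)))%:E)); last first.
          by move=> x _; congr (_%:E); field.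
        rewrite (affine_integral _ _ mI mass intTc intTcE); congr (_%:E).
        rewrite /q1 /q2 -/a -/b; field; exact: abn.
    by apply: aeW => x Ix; rewrite sum2E /=; field.
  apply: filterS TcE => x H Ix; rewrite sum2E /= -/a -/b -(H Ix).
  field; exact: abn.
move=> nab mu1 mu2 [_ [_ [_ s1]]] i1 [_ [_ [_ s2]]] i2.
near=> x => Ix r.
have S1 : \sum_(r < 2) mu1 x r = 1 by apply: (near s1 x).
have S2 : \sum_(r < 2) mu2 x r = 1 by apply: (near s2 x).
have J1 : \sum_(r < 2) tv r * mu1 x r = T x by apply: (near i1 x).
have J2 : \sum_(r < 2) tv r * mu2 x r = T x by apply: (near i2 x).
rewrite !sum2E -/a -/b in S1 S2 J1 J2.
have ab : a - b != 0 by rewrite subr_eq0; apply/eqP.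
have E0 : mu1 x ord0 = mu2 x ord0.
  apply: (mulIf ab); move: S1 S2 J1 J2; clear; move=> S1 S2 J1 J2. nra.
case: (ord2_cases r) => -> //; move: E0 S1 S2; clear; lra.
Unshelve. all: by end_near.
Qed.

Lemma counting1 (R : realType) (x : measurableTypeR R) :
  (@counting (measurableTypeR R) R [set x] = 1%E).
Proof. by rewrite /counting asboolT ?finite_set1 // fset_set1 finmap.cardfs1. Qed.

Lemma I12E (R : realType) :
  [set (k%:R : R) | k in [set k : nat | (1 <= k <= 2)%N]] = [set 1] `|` [set 2].
Proof.
apply/seteqP; split=> x /=.
  move=> [k /andP[k1 k2] <-].
  have : (k = 1 \/ k = 2)%N by lia.
  by case=> ->; [left|right].
by case=> ->; [exists 1%N|exists 2%N].
Qed.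

Lemma counting12 (R : realType) (f : measurableTypeR R -> R) :
  (\int[@counting (measurableTypeR R) R]_(x in [set 1%R] `|` [set 2%R]) (f x)%:E
    = (f 1 + f 2)%:E)%E.
Proof.
rewrite integral_setU //; last 2 first.
- move=> _ Y _; apply: countable_measurable; first by move=> t; exact: measurable_set1.
  apply: finite_set_countable; apply: (sub_finite_set (@subIsetl _ _ _)).
  by rewrite finite_setU; split; exact: finite_set1.
- apply/eqP/seteqP; split=> x //= [-> h].
  have h' : (1:R) = 2 by exact: h.
  lra.
rewrite EFinD; congr (_ + _)%E.
  rewrite (eq_integral (cst (f 1)%:E)); last by move=> x /set_mem /= ->.
  by rewrite integral_cst // [X in (_ * X)%E]counting1 mule1.
rewrite (eq_integral (cst (f 2)%:E)); last by move=> x /set_mem /= ->.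
by rewrite integral_cst // [X in (_ * X)%E]counting1 mule1.
Qed.

Lemma sum3E (R : realType) (F : 'I_3 -> R) :
  \sum_(r < 3) F r = F ord0 + F (inord 1) + F ord_max.
Proof.
rewrite !big_ord_recr big_ord0 /=.
have -> : widen_ord (leqnSn 2) (widen_ord (leqnSn 1) ord_max) = ord0 :> 'I_3 by apply: val_inj.
have -> : widen_ord (leqnSn 2) ord_max = inord 1 :> 'I_3 by apply: val_inj; rewrite /= inordK.
by rewrite GRing.add0r.
Qed.

Lemma ae_counting_pt (R : realType) (P : measurableTypeR R -> Prop) x :
  (\forall y \ae (@counting (measurableTypeR R) R), P y) -> P x.
Proof.
move=> [N [mN N0 sub]]; apply: contrapT => nPx.
have : (@counting (measurableTypeR R) R) [set x] = 0%E.
  apply: (subset_measure0 (measurable_set1 x) mN _ N0).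
  by move=> _ ->; apply: sub.
move=> h; have h1 := counting1 _ x; rewrite h in h1; have h2 : (0:R) = 1 := EFin_inj h1; clear -h2; lra.
Qed.

Definition qv3 (R : realType) : 'I_3 -> R := fun r => if (val r == 1)%N then 2 else 0.
Definition tv3 (R : realType) : 'I_3 -> R := fun r => (val r)%:R + 1.
Definition T3 (R : realType) : measurableTypeR R -> R := fun x => 2 * x - 1.

Lemma total3 (R : realType) : total_flow (qv3 R) = 2.
Proof. by rewrite /total_flow !big_ord_recr big_ord0 /qv3 /= add0r addr0 add0r. Qed.

Lemma sum3 (R : realType) : \sum_(r < 3) qv3 R r * tv3 R r = 4.
Proof.
rewrite !big_ord_recr big_ord0 /qv3 /tv3 /= !mul0r !add0r addr0.
lra.
Qed.

Lemma part3 (R : realType) :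
  (exists (qv tv : 'I_3 -> R) (I : set (measurableTypeR R))
          (m : {measure set (measurableTypeR R) -> \bar R}) T,
     flows_times qv tv /\ driver_space (total_flow qv) I m /\
     offer_profile qv tv I m T /\ ~ feasible qv tv I m T).
Proof.
have mI12 : measurable ([set 1%R] `|` [set 2%R] : set (measurableTypeR R)).
  by apply: measurableU; exact: measurable_set1.
have disj : ([set 1%R] `&` [set 2%R] : set (measurableTypeR R)) = set0.
  apply/seteqP; split=> x //= [-> h].
  have h' : (1:R) = 2 by exact: h.
  lra.
have cI : (@counting (measurableTypeR R) R) ([set 1%R] `|` [set 2%R]) = 2%:E.
  rewrite measureU //; try exact: measurable_set1.
  by rewrite [X in (X + _)%E]counting1 [X in (_ + X)%E]counting1.
exists (qv3 R), (tv3 R), [set (k%:R : R) | k in [set k : nat | (1 <= k <= 2)%N]],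
  (@counting (measurableTypeR R) R), (T3 R).
rewrite I12E.
split.
  split; first by move=> r; rewrite /qv3; case: ifP => _; lra.
  split; first by rewrite total3; lra.
  by move=> r; rewrite /tv3; apply: ltr_pwDr => //; rewrite ler0n.
split.
  split; last by rewrite total3; exact: cI.
  by right; exists 2%N; rewrite I12E.
split.
  split.
    apply: measurable_funB; last exact: measurable_cst.
    apply: measurable_funM; [exact: measurable_cst | exact: measurable_id].
  split.
    apply: aeW => x [->|->]; rewrite /T3; apply/andP; split.
    - apply: (le_trans (tmin_le (tv3 R) ord0)); rewrite /tv3 /=; lra.
    - apply: (le_trans _ (tmax_ge (tv3 R) ord_max)); rewrite /tv3 /=; lra.
    - apply: (le_trans (tmin_le (tv3 R) ord0)); rewrite /tv3 /=; lra.
    - apply: (le_trans _ (tmax_ge (tv3 R) ord_max)); rewrite /tv3 /=; lra.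
  rewrite [X in fine X]cI counting12 total3 sum3 /T3 /= -EFinM; congr (_%:E); lra.
move=> [mu [[mmu [b01 [int ae1]]] ind]].
have I1 : ([set 1%R] `|` [set 2%R] : set (measurableTypeR R)) 1 by left.
have I2 : ([set 1%R] `|` [set 2%R] : set (measurableTypeR R)) 2 by right.
have z r : qv3 R r = 0 -> mu 1 r = 0.
  move=> qr; have h : (mu 1 r + mu 2 r = qv3 R r)%R.
    by apply: EFin_inj; rewrite -(int r) (counting12 _ (fun i => mu i r)).
  rewrite qr in h.
  have := b01 1 I1 r; have := b01 2 I2 r; move=> /andP[? ?] /andP[? ?]; lra.
have z0 := z ord0 erefl.
have z2 := z ord_max erefl.
have s1 := ae_counting_pt _ _ 1 ae1 I1.
have i1 := ae_counting_pt _ _ 1 ind I1.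
move: s1 i1; rewrite !sum3E /tv3 /T3 /= z0 z2 inordK //=.
move: (mu 1 (inord 1)) => y A B; clear -A B; lra.
Qed.

Theorem proposition1 (R : realType) :
  (* (i) any number of routes n+1 >= 1 *)
  (forall (n : nat) (qv tv : 'I_n.+1 -> R) (I : set (measurableTypeR R))
          (m : {measure set (measurableTypeR R) -> \bar R}),
     flows_times qv tv -> driver_space (total_flow qv) I m ->
     forall mu, assignment_plan qv I m mu ->
       offer_profile qv tv I m (fun i => \sum_(r < n.+1) tv r * mu i r))
  /\
  (* (ii) two routes *)
  (forall (qv tv : 'I_2 -> R) (I : set (measurableTypeR R))
          (m : {measure set (measurableTypeR R) -> \bar R}),
     flows_times qv tv -> driver_space (total_flow qv) I m ->
     forall T, offer_profile qv tv I m T ->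
       feasible qv tv I m T /\
       (tv ord0 <> tv ord_max ->
        forall mu1 mu2,
          assignment_plan qv I m mu1 -> induces tv I m mu1 T ->
          assignment_plan qv I m mu2 -> induces tv I m mu2 T ->
          {ae m, forall i, I i -> forall r, mu1 i r = mu2 i r}))
  /\
  (* (iii) three routes: some offer profile is not feasible *)
  (exists (qv tv : 'I_3 -> R) (I : set (measurableTypeR R))
          (m : {measure set (measurableTypeR R) -> \bar R}) T,
     flows_times qv tv /\ driver_space (total_flow qv) I m /\
     offer_profile qv tv I m T /\ ~ feasible qv tv I m T).
Proof.
split; first exact: part1.
split; first exact: part2.
exact: part3.
Qed.
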